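(* Let $d\ge 2$ and let $n_k$ denote the number of vertices of the $k$-iterated line digraph $L^k(CK(d,4))$ of the cyclic Kautz digraph $CK(d,4)$; equivalently, $n_k$ is the number of words $a_1a_2\cdots a_{k+4}$ over the alphabet $\{0,1,\dots,d\}$ such that every block of four consecutive letters $a_ia_{i+1}a_{i+2}a_{i+3}$ satisfies $a_i\ne a_{i+1}$, $a_{i+1}\ne a_{i+2}$, $a_{i+2}\ne a_{i+3}$ and $a_i\ne a_{i+3}$. Then $n_0=d^4+d$, $n_1=d^5-d^4+d^3+2d^2-d$, and $$n_k=(d-1)\,n_{k-1}+n_{k-2}\qquad\text{for all } k\ge 2.$$ In particular, for $d=2$ the sequence is $18,30,48,78,126,\dots$ (satisfying the Fibonacci recurrence).
   Context: The cyclic Kautz digraph $CK(d,4)$ has as vertices all words $a_1a_2a_3a_4$ over $\{0,1,\dots,d\}$ with $a_i\ne a_{i+1}$ for $i=1,2,3$ and $a_1\ne a_4$, and an arc from $a_1a_2a_3a_4$ to $a_2a_3a_4a_5$ whenever $a_5\ne a_4$ and $a_5\ne a_2$. The line digraph $LG$ has as vertex set the set of arcs of $G$, with an arc from $e$ to $f$ whenever the head of $e$ equals the tail of $f$; $L^0G=G$, $L^kG=L(L^{k-1}G)$. *)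

(* Defs.v *)
From mathcomp Require Import all_boot.
Set Implicit Arguments. Unset Strict Implicit. Unset Printing Implicit Defensive.

Record digraph := Digraph { dvert : finType; darc : rel dvert }.

Definition line_digraph (G : digraph) : digraph :=
  @Digraph {p : dvert G * dvert G | @darc G p.1 p.2}
           (fun e f => (val e).2 == (val f).1).

Definition iter_line (k : nat) (G : digraph) : digraph := iter k line_digraph G.

Definition word4 (d : nat) : Type := ('I_d.+1 * 'I_d.+1 * 'I_d.+1 * 'I_d.+1)%type.

Definition ck_vertex (d : nat) (w : word4 d) : bool :=
  let: (a1, a2, a3, a4) := w in
  [&& a1 != a2, a2 != a3, a3 != a4 & a1 != a4].

Definition ck_arc (d : nat) (v w : {w : word4 d | ck_vertex w}) : bool :=
  let: (a1, a2, a3, a4) := val v in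
  let: (b1, b2, b3, b4) := val w in
  [&& b1 == a2, b2 == a3, b3 == a4, b4 != a4 & b4 != a2].

Definition CK4 (d : nat) : digraph :=
  @Digraph {w : word4 d | ck_vertex w} (@ck_arc d).

Definition nCK (d k : nat) : nat := #|dvert (iter_line k (CK4 d))|.

(* Main.v *)
Require Import Defs.
From mathcomp Require Import all_boot.
From mathcomp Require Import zify.
Set Implicit Arguments. Unset Strict Implicit. Unset Printing Implicit Defensive.

Lemma sum_sig (T : finType) (P : pred T) (F : T -> nat) :
  \sum_(x : {x | P x}) F (val x) = \sum_(x | P x) F x.
Proof.
rewrite (reindex_omap (val : {x | P x} -> T) insub); last first.
  by move=> i Pi; rewrite insubT.
by apply: eq_bigl => -[i Pi] /=; rewrite insubT /= eqxx Pi.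
Qed.

Fixpoint fw (G : digraph) (k : nat) (v : dvert G) : nat :=
  if k is k'.+1 then \sum_(w | darc v w) fw k' w else 1.

Lemma sum_line (G : digraph) (F : dvert G -> dvert G -> nat) :
  \sum_(x : dvert (line_digraph G)) F (val x).1 (val x).2 =
  \sum_(y : dvert G) \sum_(z | darc y z) F y z.
Proof.
rewrite (sum_sig (fun p : dvert G * dvert G => darc p.1 p.2) (fun p => F p.1 p.2)).
by rewrite pair_big_dep.
Qed.

Lemma fw_line (G : digraph) k (e : dvert (line_digraph G)) :
  fw k e = fw k (val e).2.
Proof.
elim: k e => [//|k IH] e /=.
under eq_bigr do rewrite IH.
rewrite big_mkcond /=.
rewrite (sum_line (fun y z => if (sval e).2 == y then fw k z else 0)).
rewrite (bigD1 (sval e).2) //= [X in _ + X]big1 ?addn0.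
  by apply: eq_bigr => z _; rewrite eqxx.
by move=> y /negbTE ye; apply: big1 => z _; rewrite eq_sym ye.
Qed.

Lemma count_line (G : digraph) k j :
  \sum_(x : dvert (iter_line k G)) fw j x = \sum_(v : dvert G) fw (j + k) v.
Proof.
elim: k j => [|k IH] j; first by rewrite addn0.
rewrite /iter_line iterS -/(iter_line k G).
under eq_bigr do rewrite fw_line.
rewrite (sum_line (fun _ z => fw j z)) addnS -addSn -IH.
by [].
Qed.
Lemma card3 d (x z y : 'I_d.+1) : y != x -> y != z ->
  #|[pred b : 'I_d.+1 | (b != x) && (b != z) && (b != y)]| = (if x == z then d - 1 else d - 2).
Proof.
move=> yx yz.
have -> : #|[pred b : 'I_d.+1 | (b != x) && (b != z) && (b != y)]| = #|~: [set x; z; y]|.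
  by apply: eq_card => b; rewrite !inE !negb_or.
have := cardsC [set x; z; y]; rewrite card_ord.
have -> : [set x; z; y] = y |: [set x; z].
  by apply/setP => b; rewrite !inE; case: (b == x); case: (b == y); case: (b == z).
rewrite cardsU1 cards2 !inE (negbTE yz) (negbTE yx) /=.
case: eqP => [->|/eqP xz] /=; rewrite ?eqxx /=; lia.
Qed.

Lemma card2 d (x z : 'I_d.+1) :
  #|[pred b : 'I_d.+1 | (b != x) && (b != z)]| = (if x == z then d else d - 1).
Proof.
have -> : #|[pred b : 'I_d.+1 | (b != x) && (b != z)]| = #|~: [set x; z]|.
  by apply: eq_card => b; rewrite !inE !negb_or.
have := cardsC [set x; z]; rewrite card_ord cards2.
case: eqP => [->|/eqP xz] /=; lia.
Qed.

Lemma card1 d (x : 'I_d.+1) : #|[pred b : 'I_d.+1 | b != x]| = d.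
Proof.
have -> : #|[pred b : 'I_d.+1 | b != x]| = #|~: [set x]|.
  by apply: eq_card => b; rewrite !inE.
have := cardsC [set x]; rewrite card_ord cards1; lia.
Qed.

Lemma sum3 d (x y z : 'I_d.+1) (A B : nat) : y != x -> y != z ->
  \sum_(b | (b != x) && (b != z)) (if y == b then A else B) =
  A + (if x == z then d - 1 else d - 2) * B.
Proof.
move=> yx yz; rewrite (bigD1 y) /= ?yx ?yz // eqxx; congr (_ + _).
rewrite (eq_bigr (fun _ => B)); last by move=> b /andP[_ /negbTE]; rewrite eq_sym => ->.
by rewrite sum_nat_const card3.
Qed.

Lemma sum2 d (x z : 'I_d.+1) c :
  \sum_(b | (b != x) && (b != z)) c = (if x == z then d else d - 1) * c.
Proof. by rewrite sum_nat_const card2. Qed.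

Lemma sum1 d (x : 'I_d.+1) c : \sum_(b | b != x) c = d * c.
Proof. by rewrite sum_nat_const card1. Qed.

Lemma sum3' d (x y : 'I_d.+1) (A B : nat) : y != x ->
  \sum_(b | b != x) (if y == b then A else B) = A + (d - 1) * B.
Proof.
move=> yx; rewrite (bigD1 y) /= ?yx // eqxx; congr (_ + _).
rewrite (eq_bigr (fun _ => B)); last by move=> b /andP[_ /negbTE]; rewrite eq_sym => ->.
rewrite sum_nat_const; congr (_ * _); have := card2 x y.
by rewrite eq_sym (negbTE yx) => <-; apply: eq_card => b; rewrite !inE.
Qed.

Lemma sum0 n c : \sum_(i : 'I_n) c = n * c.
Proof. by rewrite sum_nat_const card_ord. Qed.

Lemma sum_pair (I J : finType) (F : I * J -> nat) :
  \sum_p F p = \sum_i \sum_j F (i, j).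
Proof. by rewrite pair_bigA; apply: eq_bigr => -[]. Qed.

Lemma sum_word4 d (F : word4 d -> nat) :
  \sum_x F x = \sum_a \sum_b \sum_c \sum_e F (a, b, c, e).
Proof.
rewrite sum_pair (sum_pair (fun ab => \sum_e F (ab, e))).
by rewrite (sum_pair (fun ab => \sum_c \sum_e F (ab, c, e))).
Qed.

Definition PQ (d k : nat) : nat * nat :=
  iter k (fun pq => (pq.1 + (d - 1) * pq.2, pq.1 + (d - 2) * pq.2)) (1, 1).

Definition hk d k (w : word4 d) : nat :=
  let: (a1, a2, a3, a4) := w in if a2 == a4 then (PQ d k).1 else (PQ d k).2.

Lemma fw_CK d k (v : dvert (CK4 d)) : fw k v = hk k (val v).
Proof.
elim: k v => [|k IH] v; first by case: v => -[[[a1 a2] a3] a4] /= _; case: ifP.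
rewrite /=; under eq_bigr do rewrite IH.
have Hv := valP v.
case E: (val v) Hv => [[[a1 a2] a3] a4] Hv.
pose h (b : 'I_d.+1) : dvert (CK4 d) := insubd v (a2, a3, a4, b).
pose h' (w : dvert (CK4 d)) : 'I_d.+1 := (val w).2.
rewrite (reindex_onto h h'); last first.
  move=> w; rewrite /ck_arc E.
  case E2: (val w) => [[[b1 b2] b3] b4] /and5P[/eqP e1 /eqP e2 /eqP e3 _ _].
  subst; apply: val_inj; rewrite /h /h' val_insubd E2 /=.
  by have := valP w; rewrite E2 /ck_vertex => ->.
move: Hv; rewrite /ck_vertex => /and4P[H12 H23 H34 H14].
have HP : forall b, ck_arc v (h b) && (h' (h b) == b) = (b != a4) && (b != a2).
  move=> b; rewrite /h /h' /ck_arc val_insubd E /=.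
  case: ifP => H /=.
    by rewrite !eqxx /= andbT.
  rewrite (negbTE H12) /=; apply/esym/negbTE; move: H; rewrite H23 H34 /= => /negbT.
  by rewrite negb_and !negbK eq_sym => /orP[/eqP->|/eqP->]; rewrite eqxx ?andbF.
rewrite (eq_big _ (fun b => if a3 == b then (PQ d k).1 else (PQ d k).2) HP); last first.
  move=> b; rewrite HP => /andP[b4 b2]; rewrite /h val_insubd /= H23 H34 eq_sym b4 eq_sym b2 /=.
  by [].
change (sval v) with (val v); rewrite (sum3 _ _ H34); last by rewrite eq_sym.
rewrite E /hk /=.
by case: (a2 =P a4) => [->|/eqP ne]; rewrite ?eqxx // eq_sym (negbTE ne).
Qed.

Definition Tk d k := let p := (PQ d k).1 in let q := (PQ d k).2 in
  (p + (d - 1) * q) + (d - 1) * (p + (d - 2) * q).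

Lemma nCK_eq d k : nCK d k = (d + 1) * (d * Tk d k).
Proof.
rewrite /nCK -sum1_card.
transitivity (\sum_(x : dvert (iter_line k (CK4 d))) fw 0 x); first by [].
rewrite count_line add0n; under eq_bigr do rewrite fw_CK.
rewrite (sum_sig (@ck_vertex d) (hk k)) big_mkcond sum_word4 /= -sum0 addn1.
apply: eq_bigr => a1 _.
rewrite -(sum1 a1) [RHS]big_mkcond; apply: eq_bigr => a2 _.
case: (a2 =P a1) => [->|/eqP h21]; rewrite ?eqxx ?h21 /=.
  by rewrite big1 // => a3 _; rewrite big1 // => a4 _; rewrite /ck_vertex eqxx.
rewrite /Tk; set p := (PQ d k).1; set q := (PQ d k).2.
rewrite -(@sum3' d a2 a1 (p + (d - 1) * q) (p + (d - 2) * q)); last by rewrite eq_sym.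
rewrite [RHS]big_mkcond; apply: eq_bigr => a3 _.
case: (a3 =P a2) => [->|/eqP h32]; rewrite ?eqxx ?h32 /=.
  by rewrite big1 // => a4 _; rewrite andbF.
rewrite (_ : (if a1 == a3 then _ else _) = p + (if a3 == a1 then d - 1 else d - 2) * q);
  last by rewrite eq_sym; case: ifP.
rewrite -(@sum3 d a3 a2 a1 p q) //; last by rewrite eq_sym.
rewrite [RHS]big_mkcond; apply: eq_bigr => a4 _ /=.
rewrite eq_sym h21 eq_sym h32 /= [a3 == a4]eq_sym [a1 == a4]eq_sym.
by case: (a4 != a3); case: (a4 != a1).
Qed.

Lemma PQS d m : PQ d m.+1 =
  ((PQ d m).1 + (d - 1) * (PQ d m).2, (PQ d m).1 + (d - 2) * (PQ d m).2).
Proof. by []. Qed.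

Theorem mainTheorem10 (d : nat) (hd : 2 <= d) :
  [/\ nCK d 0 = d ^ 4 + d,
      nCK d 1 = d ^ 5 - d ^ 4 + d ^ 3 + 2 * d ^ 2 - d,
      (forall k, 2 <= k -> nCK d k = (d - 1) * nCK d k.-1 + nCK d k.-2) &
      (d = 2 -> [/\ nCK d 0 = 18, nCK d 1 = 30, nCK d 2 = 48, nCK d 3 = 78
                  & nCK d 4 = 126])].
Proof.
have [e ->] : exists e, d = e.+2 by exists d.-2; lia.
split.
- have h0 : Tk e.+2 0 = (1 + e.+1) + e.+1 * (1 + e) by rewrite /Tk /= !subSS !subn0 !muln1.
  rewrite nCK_eq h0. nia.
- have h1 : Tk e.+2 1 = (e.+2 + e.+1 * e.+1) + e.+1 * (e.+2 + e * e.+1).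
    by rewrite /Tk /= !subSS !subn0 !muln1 add1n.
  rewrite nCK_eq h1.
  have h : (e.+2 + 1) * (e.+2 * ((e.+2 + e.+1 * e.+1) + e.+1 * (e.+2 + e * e.+1)))
     + e.+2 ^ 4 + e.+2 = e.+2 ^ 5 + e.+2 ^ 3 + 2 * e.+2 ^ 2.
    rewrite !expnS expn0 !muln1. nia.
  have h2 : e.+2 ^ 4 <= e.+2 ^ 5 by rewrite leq_exp2l.
  move: h h2; set L := (e.+2 + 1) * _; set A := e.+2 ^ 4; set B := e.+2 ^ 5;
    set C := e.+2 ^ 3; set D := e.+2 ^ 2; clearbody L A B C D. lia.
- case=> [|[|m]] // _; rewrite /= !nCK_eq /Tk !PQS !subSS !subn0.
  set p := (PQ e.+2 m).1; set q := (PQ e.+2 m).2. cbn [fst snd]. clearbody p q. nia.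
- by case=> ->; rewrite !nCK_eq.
Qed.
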